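(* Let $\mathbf{x}$ be a probability vector for $S$ and define $W_{\rm det}=\sup\{W\in\mathbb{R}:\ \mathbf{x}\otimes(1,0)\succ_g\mathbf{g}\otimes(0,1)\text{ with respect to }H_{SW}(W)\}$. Then the supremum is attained and $$W_{\rm det}=-kT\log\sum_{i:\,x_i\ne0}g_i.$$
   Context: $S$ has Hamiltonian $H_S=\sum_{i=1}^nE_i|i\rangle\langle i|$, $\beta=1/(kT)>0$, $Z_S=\sum_ie^{-\beta E_i}$, Gibbs vector $g_i=e^{-\beta E_i}/Z_S$. The battery is a two-level system with Hamiltonian $W|1\rangle\langle1|$ and $H_{SW}(W)=H_S\otimes\mathbb{I}+\mathbb{I}\otimes W|1\rangle\langle1|$; $\mathbf{x}\otimes(1,0)$ denotes the product distribution with battery in $|0\rangle$, and $\mathbf{g}\otimes(0,1)$ with battery in $|1\rangle$. Thermo-majorisation for a Hamiltonian $H$ with eigenvalues $\epsilon_1,\dots,\epsilon_m$ and $Z=\sum_je^{-\beta\epsilon_j}$: for a probability vector $\mathbf{u}$ let $\pi$ order $u_{\pi(1)}e^{\beta\epsilon_{\pi(1)}}\ge\dots\ge u_{\pi(m)}e^{\beta\epsilon_{\pi(m)}}$; the curve $T(\mathbf{u})$ is the piecewise linear function on $[0,Z]$ joining the origin and $\big(\sum_{j\le k}e^{-\beta\epsilon_{\pi(j)}},\sum_{j\le k}u_{\pi(j)}\big)$, $k=1,\dots,m$; $\mathbf{u}\succ_g\mathbf{v}$ iff $T(\mathbf{u})\ge T(\mathbf{v})$ pointwise. *)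

(* Defs.v *)
From Stdlib Require Import Reals Lra List Sorting.Sorted Sorting.Permutation.
Open Scope R_scope.

Definition Rsum_list (l : list R) : R := fold_right Rplus 0 l.

Definition Rsum_upto (m : nat) (f : nat -> R) : R := Rsum_list (map f (seq 0 m)).

Definition partition (beta : R) (m : nat) (eps : nat -> R) : R :=
  Rsum_upto m (fun j => exp (- beta * eps j)).

Definition beta_ordering (beta : R) (m : nat) (eps u : nat -> R) (l : list nat) : Prop :=
  Permutation l (seq 0 m) /\
  Sorted (fun a b => u b * exp (beta * eps b) <= u a * exp (beta * eps a)) l.

(* The piecewise linear curve joining the origin and the points
   (sum_{j<=k} e^{-beta eps_{pi(j)}}, sum_{j<=k} u_{pi(j)}), evaluated at t
   (meaningful for 0 <= t <= Z). *)
Fixpoint thermo_curve (beta : R) (eps u : nat -> R) (l : list nat) (t : R) : R :=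
  match l with
  | nil => 0
  | j :: l' =>
      let w := exp (- beta * eps j) in
      if Rle_dec t w then (t / w) * u j
      else u j + thermo_curve beta eps u l' (t - w)
  end.

(* The curve does not
   depend on how ties are broken in the ordering; we quantify over all
   valid orderings (which always exist). *)
Definition thermo_majorises (beta : R) (m : nat) (eps u v : nat -> R) : Prop :=
  forall lu lv : list nat,
    beta_ordering beta m eps u lu ->
    beta_ordering beta m eps v lv ->
    forall t, 0 <= t <= partition beta m eps ->
      thermo_curve beta eps v lv t <= thermo_curve beta eps u lu t.

Definition gibbs (beta : R) (n : nat) (E : nat -> R) (i : nat) : R :=
  exp (- beta * E i) / partition beta n E.

(* Joint system S (x) battery, 2n levels: index k < n is |k>|0>,
   index n + i is |i>|1>. Energies of H_SW(W). *)
Definition energy_SW (n : nat) (E : nat -> R) (W : R) (k : nat) : R :=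
  if Nat.ltb k n then E k else E (k - n)%nat + W.

Definition tensor_bat0 (n : nat) (x : nat -> R) (k : nat) : R :=
  if Nat.ltb k n then x k else 0.

Definition tensor_bat1 (n : nat) (y : nat -> R) (k : nat) : R :=
  if Nat.ltb k n then 0 else y (k - n)%nat.

Definition is_prob_vector (n : nat) (x : nat -> R) : Prop :=
  (forall i, (i < n)%nat -> 0 <= x i) /\ Rsum_upto n x = 1.

Definition det_work_set (beta : R) (n : nat) (E x : nat -> R) (W : R) : Prop :=
  thermo_majorises beta (2 * n) (energy_SW n E W)
    (tensor_bat0 n x) (tensor_bat1 n (gibbs beta n E)).

(* Main.v *)
Require Import Defs.
From Stdlib Require Import Reals Lra List Sorting.Sorted Sorting.Permutation Lia.
Open Scope R_scope.

Definition SL (l : list nat) (f : nat -> R) : R := Rsum_list (map f l).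
Lemma SL_nil f : SL nil f = 0. Proof. reflexivity. Qed.
Lemma SL_cons a l f : SL (a :: l) f = f a + SL l f. Proof. reflexivity. Qed.
Lemma SL_app l1 l2 f : SL (l1 ++ l2) f = SL l1 f + SL l2 f.
Proof.
  induction l1 as [|a l1 IH].
  - rewrite app_nil_l, SL_nil; ring.
  - change ((a :: l1) ++ l2) with (a :: (l1 ++ l2)). rewrite !SL_cons, IH; ring.
Qed.
Lemma SL_ext l f g : (forall j, In j l -> f j = g j) -> SL l f = SL l g.
Proof.
  induction l as [|a l IH]; intros H; [reflexivity|].
  rewrite !SL_cons, H by (left; auto). rewrite IH; auto.
  intros j Hj; apply H; right; auto.
Qed.
Lemma SL_perm l l' f : Permutation l l' -> SL l f = SL l' f.
Proof.
  induction 1.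
  - reflexivity.
  - rewrite !SL_cons, IHPermutation; reflexivity.
  - rewrite !SL_cons; ring.
  - congruence.
Qed.
Lemma SL_scale l c f : SL l (fun j => c * f j) = c * SL l f.
Proof. induction l as [|a l IH]; [rewrite !SL_nil; ring| rewrite !SL_cons, IH; ring]. Qed.
Lemma SL_zero l : SL l (fun _ => 0) = 0.
Proof. induction l as [|a l IH]; [reflexivity| rewrite SL_cons, IH; ring]. Qed.
Lemma SL_nonneg l f : (forall j, In j l -> 0 <= f j) -> 0 <= SL l f.
Proof.
  induction l as [|a l IH]; intros H; [rewrite SL_nil; lra|].
  rewrite SL_cons. pose proof (H a (or_introl eq_refl)).
  assert (0 <= SL l f) by (apply IH; intros; apply H; right; auto). lra.
Qed.
Lemma SL_shift a f : forall m b, SL (seq (a + b) m) f = SL (seq b m) (fun i => f (a + i)%nat).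
Proof.
  induction m; intros b; [reflexivity|]. cbn [seq]. rewrite !SL_cons.
  replace (S (a + b)) with (a + S b)%nat by lia. rewrite IHm. reflexivity.
Qed.
Lemma SL_split n f : SL (seq 0 (2 * n)) f = SL (seq 0 n) f + SL (seq 0 n) (fun i => f (n + i)%nat).
Proof.
  replace (2 * n)%nat with (n + n)%nat by lia. rewrite seq_app, SL_app.
  replace (0 + n)%nat with (n + 0)%nat by lia. rewrite SL_shift. reflexivity.
Qed.

Definition Apos (u w : nat -> R) l := SL l (fun j => if Req_EM_T (u j) 0 then 0 else w j).
Lemma Apos_cons u w j l : Apos u w (j :: l) = (if Req_EM_T (u j) 0 then 0 else w j) + Apos u w l.
Proof. reflexivity. Qed.
Lemma Apos_nil u w : Apos u w nil = 0. Proof. reflexivity. Qed.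
Lemma Apos_nonneg u w l : (forall j, 0 < w j) -> 0 <= Apos u w l.
Proof.
  intros Hw. apply SL_nonneg. intros j _. destruct Req_EM_T; [lra| left; auto].
Qed.
Lemma Apos_pos_U u w l : (forall j, In j l -> 0 <= u j) -> 0 < Apos u w l -> 0 < SL l u.
Proof.
  induction l as [|j l IH]; intros Hu HA; [rewrite Apos_nil in HA; lra|].
  rewrite Apos_cons in HA. rewrite SL_cons.
  assert (Hu' : forall k, In k l -> 0 <= u k) by (intros; apply Hu; right; auto).
  pose proof (Hu j (or_introl eq_refl)).
  destruct Req_EM_T as [e|ne].
  - rewrite e. assert (0 < SL l u) by (apply IH; auto; lra). lra.
  - pose proof (SL_nonneg l u Hu'). lra.
Qed.
Lemma U_pos_Apos u w l : (forall j, 0 < w j) -> (forall j, In j l -> 0 <= u j) -> 0 < SL l u -> 0 < Apos u w l.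
Proof.
  intros Hw. induction l as [|j l IH]; intros Hu HU; [rewrite SL_nil in HU; lra|].
  rewrite Apos_cons. rewrite SL_cons in HU.
  assert (Hu' : forall k, In k l -> 0 <= u k) by (intros; apply Hu; right; auto).
  destruct Req_EM_T as [e|ne].
  - rewrite e in HU. assert (0 < Apos u w l) by (apply IH; auto; lra). lra.
  - pose proof (Apos_nonneg u w l Hw). pose proof (Hw j). lra.
Qed.

Lemma tc_le beta eps u j l t : t <= exp (- beta * eps j) ->
  thermo_curve beta eps u (j :: l) t = t / exp (- beta * eps j) * u j.
Proof. intros H. cbn [thermo_curve]. destruct Rle_dec; [reflexivity|contradiction]. Qed.
Lemma tc_gt beta eps u j l t : exp (- beta * eps j) < t ->
  thermo_curve beta eps u (j :: l) t = u j + thermo_curve beta eps u l (t - exp (- beta * eps j)).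
Proof. intros H. cbn [thermo_curve]. destruct Rle_dec; [lra|reflexivity]. Qed.

Lemma qfacts t w : 0 < w -> 0 <= t -> t <= w -> 0 <= t / w /\ t / w * w = t /\ t / w <= 1.
Proof.
  intros Hw Ht Htw.
  assert (H1 : 0 <= t / w) by (unfold Rdiv; apply Rmult_le_pos; [lra| left; apply Rinv_0_lt_compat; lra]).
  assert (H2 : t / w * w = t) by (field; lra).
  split; [auto| split; [auto| nra]].
Qed.

Lemma tc_nonneg beta eps u l : (forall j, In j l -> 0 <= u j) ->
  forall t, 0 <= t -> 0 <= thermo_curve beta eps u l t.
Proof.
  induction l as [|j l IH]; intros Hu t Ht; [simpl; lra|].
  assert (Hu' : forall k, In k l -> 0 <= u k) by (intros; apply Hu; right; auto).
  pose proof (Hu j (or_introl eq_refl)). pose proof (exp_pos (- beta * eps j)).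
  destruct (Rle_dec t (exp (- beta * eps j))) as [h|h].
  - rewrite tc_le by auto. destruct (qfacts t _ H0 Ht h) as [q1 [q2 q3]]. nra.
  - rewrite tc_gt by lra. pose proof (IH Hu' (t - exp (- beta * eps j)) ltac:(lra)). lra.
Qed.

Lemma tc_upper_c beta eps u l c : 0 <= c -> (forall j, In j l -> u j <= c * exp (- beta * eps j)) ->
  forall t, 0 <= t -> thermo_curve beta eps u l t <= c * t.
Proof.
  intros Hc. induction l as [|j l IH]; intros Hu t Ht; [simpl; nra|].
  assert (Hu' : forall k, In k l -> u k <= c * exp (- beta * eps k)) by (intros; apply Hu; right; auto).
  pose proof (Hu j (or_introl eq_refl)). pose proof (exp_pos (- beta * eps j)).
  destruct (Rle_dec t (exp (- beta * eps j))) as [h|h].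
  - rewrite tc_le by auto. destruct (qfacts t _ H0 Ht h) as [q1 [q2 q3]]. nra.
  - rewrite tc_gt by lra. pose proof (IH Hu' (t - exp (- beta * eps j)) ltac:(lra)). nra.
Qed.

Lemma tc_upper_U beta eps u l : (forall j, In j l -> 0 <= u j) ->
  forall t, 0 <= t -> thermo_curve beta eps u l t <= SL l u.
Proof.
  induction l as [|j l IH]; intros Hu t Ht; [simpl; rewrite SL_nil; lra|].
  assert (Hu' : forall k, In k l -> 0 <= u k) by (intros; apply Hu; right; auto).
  rewrite SL_cons. pose proof (SL_nonneg l u Hu').
  pose proof (Hu j (or_introl eq_refl)). pose proof (exp_pos (- beta * eps j)).
  destruct (Rle_dec t (exp (- beta * eps j))) as [h|h].
  - rewrite tc_le by auto. destruct (qfacts t _ H1 Ht h) as [q1 [q2 q3]]. nra.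
  - rewrite tc_gt by lra. pose proof (IH Hu' (t - exp (- beta * eps j)) ltac:(lra)). nra.
Qed.

Lemma tc_strict beta eps u l : (forall j, In j l -> 0 <= u j) ->
  forall t, 0 <= t -> t < Apos u (fun j => exp (- beta * eps j)) l ->
  thermo_curve beta eps u l t < SL l u.
Proof.
  induction l as [|j l IH]; intros Hu t Ht HA; [rewrite Apos_nil in HA; lra|].
  assert (Hu' : forall k, In k l -> 0 <= u k) by (intros; apply Hu; right; auto).
  rewrite SL_cons. pose proof (SL_nonneg l u Hu').
  pose proof (Hu j (or_introl eq_refl)). pose proof (exp_pos (- beta * eps j)).
  rewrite Apos_cons in HA. cbv beta in HA.
  pose proof (Apos_nonneg u (fun j => exp (- beta * eps j)) l (fun j => exp_pos _)) as HA0.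
  destruct (Rle_dec t (exp (- beta * eps j))) as [h|h].
  - rewrite tc_le by auto. destruct (qfacts t _ H1 Ht h) as [q1 [q2 q3]].
    destruct Req_EM_T as [e|ne].
    + rewrite e. assert (0 < SL l u) by (apply (Apos_pos_U u (fun j => exp (- beta * eps j))); auto; lra). nra.
    + destruct (Rlt_or_le 0 (Apos u (fun j => exp (- beta * eps j)) l)) as [hp|hp].
      * assert (0 < SL l u) by (apply (Apos_pos_U u (fun j => exp (- beta * eps j))); auto). nra.
      * assert (u j <> 0) by auto. assert (0 < u j) by lra. assert (t / exp (- beta * eps j) < 1) by nra. nra.
  - rewrite tc_gt by lra.
    assert (t - exp (- beta * eps j) < Apos u (fun j => exp (- beta * eps j)) l) by (destruct Req_EM_T; lra).
    pose proof (IH Hu' (t - exp (- beta * eps j)) ltac:(lra) H2). lra.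
Qed.

Lemma slope_w u e beta : u = (u * exp (beta * e)) * exp (- beta * e).
Proof.
  rewrite Rmult_assoc, <- exp_plus. replace (beta * e + - beta * e) with 0 by ring.
  rewrite exp_0; ring.
Qed.

Lemma SL_slope_bound beta eps u l s : (forall k, In k l -> u k * exp (beta * eps k) <= s) ->
  SL l u <= s * Apos u (fun j => exp (- beta * eps j)) l.
Proof.
  induction l as [|k l IH]; intros H; [rewrite SL_nil, Apos_nil; lra|].
  rewrite SL_cons, Apos_cons. cbv beta.
  assert (H' : forall k, In k l -> u k * exp (beta * eps k) <= s) by (intros; apply H; right; auto).
  specialize (IH H'). pose proof (H k (or_introl eq_refl)).
  destruct Req_EM_T as [e|ne]; [rewrite e; lra|].
  pose proof (exp_pos (- beta * eps k)). rewrite (slope_w (u k) (eps k) beta) at 1. nra.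
Qed.

Lemma tc_lower beta eps u l :
  StronglySorted (fun a b => u b * exp (beta * eps b) <= u a * exp (beta * eps a)) l ->
  (forall j, In j l -> 0 <= u j) ->
  forall t, 0 <= t ->
  (t <= Apos u (fun j => exp (- beta * eps j)) l ->
     t * SL l u <= thermo_curve beta eps u l t * Apos u (fun j => exp (- beta * eps j)) l) /\
  (Apos u (fun j => exp (- beta * eps j)) l <= t -> SL l u <= thermo_curve beta eps u l t).
Proof.
  induction l as [|j l IH]; intros Hs Hu t Ht.
  - rewrite SL_nil, Apos_nil. simpl. split; intros; lra.
  - inversion Hs as [|? ? Hs' Hall]; subst.
    rewrite Forall_forall in Hall.
    assert (Hu' : forall k, In k l -> 0 <= u k) by (intros; apply Hu; right; auto).
    pose proof (Hu j (or_introl eq_refl)) as Huj.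
    pose proof (tc_nonneg beta eps u (j :: l) Hu t Ht) as HT0.
    set (s := u j * exp (beta * eps j)) in *.
    pose proof (SL_slope_bound beta eps u l s Hall) as Hb.
    pose proof (SL_nonneg l u Hu') as HU0.
    pose proof (Apos_nonneg u (fun j => exp (- beta * eps j)) l (fun j => exp_pos _)) as HA0.
    set (A' := Apos u (fun j => exp (- beta * eps j)) l) in *.
    set (U' := SL l u) in *.
    rewrite SL_cons, Apos_cons. cbv beta. fold U'.
    change (Apos u (fun k => exp (- beta * eps k)) l) with A'.
    pose proof (exp_pos (- beta * eps j)) as Hw.
    assert (Hus : u j = s * exp (- beta * eps j)) by apply slope_w.
    destruct Req_EM_T as [e|ne].
    + assert (s = 0) by (unfold s; rewrite e; ring).
      assert (U' = 0) by nra.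
      rewrite e. split; intros; nra.
    + assert (0 < u j) by lra.
      assert (0 < s) by nra.
      specialize (IH Hs' Hu').
      set (w := exp (- beta * eps j)) in *.
      destruct (Rle_dec t w) as [h|h].
      * rewrite tc_le by auto. fold w. destruct (qfacts t _ Hw Ht h) as [q1 [q2 q3]].
        assert (t / w * u j = s * t) by (rewrite Hus; rewrite <- q2 at 2; ring).
        rewrite H1. split; intros.
        -- assert (0 <= t * (s * A' - U')) by (apply Rmult_le_pos; lra).
           rewrite Hus. nra.
        -- assert (A' = 0) by lra. assert (HU : U' = 0) by nra. assert (Htw : t = w) by lra.
           rewrite HU, Htw. lra.
      * rewrite (tc_gt _ _ _ _ _ _ (Rnot_le_lt _ _ h)). fold w.
        destruct (IH (t - w) ltac:(lra)) as [IHa IHb].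
        fold A' U' in IHa, IHb.
        set (T' := thermo_curve beta eps u l (t - w)) in *.
        split; intros.
        -- assert (0 < A') by lra.
           specialize (IHa ltac:(lra)).
           remember (t - w) as tau.
           replace t with (w + tau) by lra.
           apply Rmult_le_reg_l with A'; [lra|].
           assert (K1 : tau * U' * (w + A') <= T' * A' * (w + A')) by (apply Rmult_le_compat_r; lra).
           assert (K2 : 0 <= w * (A' - tau) * (s * A' - U')).
           { apply Rmult_le_pos; [apply Rmult_le_pos|]; lra. }
           rewrite Hus. nra.
        -- specialize (IHb ltac:(lra)). lra.
Qed.

Fixpoint ins (f : nat -> R) (a : nat) (l : list nat) : list nat :=
  match l with
  | nil => a :: nil
  | b :: l' => if Rle_dec (f b) (f a) then a :: b :: l' else b :: ins f a l'
  end.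
Fixpoint isort (f : nat -> R) (l : list nat) : list nat :=
  match l with nil => nil | a :: l' => ins f a (isort f l') end.

Lemma ins_perm f a l : Permutation (ins f a l) (a :: l).
Proof.
  induction l as [|b l IH]; simpl; [auto|].
  destruct Rle_dec; [auto|].
  eapply perm_trans; [apply perm_skip; exact IH| apply perm_swap].
Qed.
Lemma isort_perm f l : Permutation (isort f l) l.
Proof.
  induction l as [|a l IH]; simpl; [auto|].
  eapply perm_trans; [apply ins_perm| apply perm_skip; exact IH].
Qed.
Lemma ins_hd f a b l : f a <= f b -> HdRel (fun x y => f y <= f x) b l ->
  HdRel (fun x y => f y <= f x) b (ins f a l).
Proof.
  intros H1 H2. destruct l as [|c l]; simpl; [constructor; auto|].
  destruct Rle_dec; constructor; [auto| inversion H2; auto].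
Qed.
Lemma ins_sorted f a l : Sorted (fun x y => f y <= f x) l -> Sorted (fun x y => f y <= f x) (ins f a l).
Proof.
  induction l as [|b l IH]; intros H; simpl; [auto|].
  destruct Rle_dec as [r|r].
  - constructor; [auto| constructor; auto].
  - apply Sorted_inv in H. destruct H as [H1 H2]. constructor; [auto|].
    apply ins_hd; auto. lra.
Qed.
Lemma isort_sorted f l : Sorted (fun x y => f y <= f x) (isort f l).
Proof. induction l; simpl; [constructor| apply ins_sorted; auto]. Qed.

Lemma ordering_exists beta m eps u : exists l, beta_ordering beta m eps u l.
Proof.
  exists (isort (fun k => u k * exp (beta * eps k)) (seq 0 m)). split.
  - apply isort_perm.
  - apply (isort_sorted (fun k => u k * exp (beta * eps k))).
Qed.

Lemma ordering_ss beta m eps u l : beta_ordering beta m eps u l ->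
  StronglySorted (fun a b => u b * exp (beta * eps b) <= u a * exp (beta * eps a)) l.
Proof.
  intros [_ H]. apply Sorted_StronglySorted; auto.
  intros a b c h1 h2. lra.
Qed.

Lemma ltb_lo i n : (i < n)%nat -> Nat.ltb i n = true.
Proof. intros; apply Nat.ltb_lt; auto. Qed.
Lemma ltb_hi n i : Nat.ltb (n + i) n = false.
Proof. apply Nat.ltb_ge; lia. Qed.
Lemma sub_hi n i : (n + i - n = i)%nat.
Proof. lia. Qed.
Lemma Rsum_upto_SL m f : Rsum_upto m f = SL (seq 0 m) f.
Proof. reflexivity. Qed.
Lemma exp_split a b beta : exp (- beta * (a + b)) = exp (- beta * a) * exp (- beta * b).
Proof. rewrite <- exp_plus; f_equal; ring. Qed.

Theorem mainTheorem8 (n : nat) (E : nat -> R) (beta : R) (x : nat -> R)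
  (hbeta : 0 < beta) (hx : is_prob_vector n x) :
  let Wdet := - (1 / beta) *
      ln (Rsum_upto n (fun i => if Req_EM_T (x i) 0 then 0 else gibbs beta n E i)) in
  is_lub (det_work_set beta n E x) Wdet /\ det_work_set beta n E x Wdet.
Proof.
  intros Wdet. destruct hx as [hx0 hx1].
  assert (hn : (0 < n)%nat) by (destruct n; [unfold Rsum_upto in hx1; simpl in hx1; lra| lia]).
  set (ZS := Defs.partition beta n E).
  assert (HZS : ZS = SL (seq 0 n) (fun i => exp (- beta * E i))) by reflexivity.
  assert (ZSpos : 0 < ZS).
  { rewrite HZS. destruct n as [|n']; [lia|]. cbn [seq]. rewrite SL_cons.
    pose proof (exp_pos (-beta*E 0%nat)).
    pose proof (SL_nonneg (seq 1 n') (fun i => exp (-beta*E i)) (fun j _ => Rlt_le _ _ (exp_pos _))). lra. }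
  set (P := Apos x (fun i => exp (- beta * E i)) (seq 0 n)).
  assert (HxS : SL (seq 0 n) x = 1) by exact hx1.
  assert (Ppos : 0 < P).
  { apply (U_pos_Apos x (fun i => exp (-beta*E i))); [intros; apply exp_pos| | lra].
    intros j Hj; apply hx0; apply in_seq in Hj; lia. }
  assert (HG : Rsum_upto n (fun i => if Req_EM_T (x i) 0 then 0 else gibbs beta n E i) = P / ZS).
  { rewrite Rsum_upto_SL.
    transitivity (SL (seq 0 n) (fun i => / ZS * (if Req_EM_T (x i) 0 then 0 else exp (- beta * E i)))).
    - apply SL_ext; intros j _. unfold gibbs; fold ZS. destruct Req_EM_T; [ring| field; lra].
    - rewrite SL_scale. unfold P, Apos. field; lra. }
  assert (HeW : exp (- beta * Wdet) = P / ZS).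
  { assert (HWd : - beta * Wdet = ln (P/ZS)) by (unfold Wdet; rewrite HG; field; lra).
    rewrite HWd, exp_ln; [reflexivity| apply Rdiv_lt_0_compat; auto]. }
  set (u0 := tensor_bat0 n x).
  set (v1 := tensor_bat1 n (gibbs beta n E)).
  assert (Cu0 : forall j, 0 <= u0 j).
  { intros j. unfold u0, tensor_bat0. destruct (Nat.ltb j n) eqn:E1; [apply hx0; apply Nat.ltb_lt; auto| lra]. }
  assert (Cv0 : forall j, 0 <= v1 j).
  { intros j. unfold v1, tensor_bat1. destruct (Nat.ltb j n); [lra|].
    unfold gibbs; fold ZS. left; apply Rdiv_lt_0_compat; [apply exp_pos| auto]. }
  assert (C1 : forall l, Permutation l (seq 0 (2 * n)) -> SL l u0 = 1).
  { intros l Hl. rewrite (SL_perm _ _ _ Hl), SL_split.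
    assert (e1 : SL (seq 0 n) u0 = SL (seq 0 n) x).
    { apply SL_ext; intros j Hj; apply in_seq in Hj. unfold u0, tensor_bat0. rewrite ltb_lo by lia; reflexivity. }
    assert (e2 : SL (seq 0 n) (fun i => u0 (n + i)%nat) = SL (seq 0 n) (fun _ => 0)).
    { apply SL_ext; intros j Hj. unfold u0, tensor_bat0. rewrite ltb_hi; reflexivity. }
    rewrite e1, e2, SL_zero. lra. }
  assert (C2 : forall W l, Permutation l (seq 0 (2 * n)) ->
            Apos u0 (fun j => exp (- beta * energy_SW n E W j)) l = P).
  { intros W l Hl. unfold Apos. rewrite (SL_perm _ _ _ Hl), SL_split.
    assert (e1 : SL (seq 0 n) (fun j => if Req_EM_T (u0 j) 0 then 0 else exp (- beta * energy_SW n E W j)) = P).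
    { apply SL_ext; intros j Hj; apply in_seq in Hj. unfold u0, tensor_bat0, energy_SW. rewrite ltb_lo by lia; reflexivity. }
    assert (e2 : SL (seq 0 n) (fun i => if Req_EM_T (u0 (n + i)%nat) 0 then 0 else exp (- beta * energy_SW n E W (n + i)%nat)) = SL (seq 0 n) (fun _ => 0)).
    { apply SL_ext; intros j Hj. unfold u0, tensor_bat0. rewrite ltb_hi. destruct Req_EM_T; [reflexivity| lra]. }
    rewrite e1, e2, SL_zero. lra. }
  assert (C3 : forall l, Permutation l (seq 0 (2 * n)) -> SL l v1 = 1).
  { intros l Hl. rewrite (SL_perm _ _ _ Hl), SL_split.
    assert (e1 : SL (seq 0 n) v1 = SL (seq 0 n) (fun _ => 0)).
    { apply SL_ext; intros j Hj; apply in_seq in Hj. unfold v1, tensor_bat1. rewrite ltb_lo by lia; reflexivity. }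
    assert (e2 : SL (seq 0 n) (fun i => v1 (n + i)%nat) = SL (seq 0 n) (fun i => / ZS * exp (- beta * E i))).
    { apply SL_ext; intros j Hj. unfold v1, tensor_bat1. rewrite ltb_hi, sub_hi. unfold gibbs; fold ZS. field; lra. }
    rewrite e1, e2, SL_zero, SL_scale, <- HZS. field; lra. }
  assert (C4 : forall W l, Permutation l (seq 0 (2 * n)) ->
            Apos v1 (fun j => exp (- beta * energy_SW n E W j)) l = ZS * exp (- beta * W)).
  { intros W l Hl. unfold Apos. rewrite (SL_perm _ _ _ Hl), SL_split.
    assert (e1 : SL (seq 0 n) (fun j => if Req_EM_T (v1 j) 0 then 0 else exp (- beta * energy_SW n E W j)) = SL (seq 0 n) (fun _ => 0)).
    { apply SL_ext; intros j Hj; apply in_seq in Hj. unfold v1, tensor_bat1. rewrite ltb_lo by lia.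
      destruct Req_EM_T; [reflexivity| lra]. }
    assert (e2 : SL (seq 0 n) (fun i => if Req_EM_T (v1 (n + i)%nat) 0 then 0 else exp (- beta * energy_SW n E W (n + i)%nat)) = SL (seq 0 n) (fun i => exp (- beta * W) * exp (- beta * E i))).
    { apply SL_ext; intros j Hj. pose proof (Cv0 (n + j)%nat) as hv.
      unfold v1, tensor_bat1, energy_SW in *. rewrite ltb_hi, sub_hi in *.
      destruct Req_EM_T as [e|ne].
      - exfalso. unfold gibbs in e; fold ZS in e. pose proof (exp_pos (- beta * E j)).
        assert (0 < exp (- beta * E j) / ZS) by (apply Rdiv_lt_0_compat; auto). lra.
      - rewrite exp_split; ring. }
    rewrite e1, e2, SL_zero, SL_scale, <- HZS. ring. }
  assert (C5 : forall W, Defs.partition beta (2 * n) (energy_SW n E W) = ZS + ZS * exp (- beta * W)).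
  { intros W. unfold Defs.partition. rewrite Rsum_upto_SL, SL_split.
    assert (e1 : SL (seq 0 n) (fun j => exp (- beta * energy_SW n E W j)) = ZS).
    { rewrite HZS. apply SL_ext; intros j Hj; apply in_seq in Hj. unfold energy_SW. rewrite ltb_lo by lia; reflexivity. }
    assert (e2 : SL (seq 0 n) (fun i => exp (- beta * energy_SW n E W (n + i)%nat)) = SL (seq 0 n) (fun i => exp (- beta * W) * exp (- beta * E i))).
    { apply SL_ext; intros j Hj. unfold energy_SW. rewrite ltb_hi, sub_hi, exp_split; ring. }
    rewrite e1, e2, SL_scale, <- HZS. ring. }
  assert (C6 : forall W j, v1 j <= exp (beta * W) / ZS * exp (- beta * energy_SW n E W j)).
  { intros W j. unfold v1, tensor_bat1, energy_SW. destruct (Nat.ltb j n).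
    - left. apply Rmult_lt_0_compat; [apply Rdiv_lt_0_compat; [apply exp_pos| auto]| apply exp_pos].
    - right. unfold gibbs; fold ZS. rewrite exp_split.
      replace (exp (beta * W) / ZS * (exp (- beta * E (j - n)%nat) * exp (- beta * W)))
        with ((exp (beta * W) * exp (- beta * W)) * exp (- beta * E (j - n)%nat) / ZS) by (field; lra).
      rewrite <- exp_plus. replace (beta * W + - beta * W) with 0 by ring. rewrite exp_0. field; lra. }
  assert (Hdet : det_work_set beta n E x Wdet).
  { unfold det_work_set, thermo_majorises. fold u0 v1.
    intros lu lv Hlu Hlv t [t0 tZ].
    pose proof Hlu as [Plu _]. pose proof Hlv as [Plv _].
    set (c := exp (beta * Wdet) / ZS).
    assert (cP : c * P = 1).
    { assert (P = ZS * exp (- beta * Wdet)) by (rewrite HeW; field; lra).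
      unfold c. rewrite H. replace (exp (beta * Wdet) / ZS * (ZS * exp (- beta * Wdet)))
        with (exp (beta * Wdet) * exp (- beta * Wdet)) by (field; lra).
      rewrite <- exp_plus. replace (beta * Wdet + - beta * Wdet) with 0 by ring. apply exp_0. }
    assert (c0 : 0 <= c) by (left; apply Rdiv_lt_0_compat; [apply exp_pos| auto]).
    pose proof (tc_upper_c beta (energy_SW n E Wdet) v1 lv c c0 (fun j _ => C6 Wdet j) t t0) as Hv1.
    pose proof (tc_upper_U beta (energy_SW n E Wdet) v1 lv (fun j _ => Cv0 j) t t0) as Hv2.
    rewrite (C3 lv Plv) in Hv2.
    pose proof (tc_lower beta (energy_SW n E Wdet) u0 lu (ordering_ss _ _ _ _ _ Hlu) (fun j _ => Cu0 j) t t0) as [Ha Hb].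
    rewrite (C2 Wdet lu Plu), (C1 lu Plu) in Ha, Hb.
    set (Tu := thermo_curve beta (energy_SW n E Wdet) u0 lu t) in *.
    set (Tv := thermo_curve beta (energy_SW n E Wdet) v1 lv t) in *.
    destruct (Rle_dec t P) as [h|h].
    - specialize (Ha h). nra.
    - specialize (Hb ltac:(lra)). lra. }
  split; [split|exact Hdet].
  - intros W HW. destruct (Rle_lt_dec W Wdet) as [h|h]; [exact h|]. exfalso.
    destruct (ordering_exists beta (2 * n) (energy_SW n E W) u0) as [lu Hlu].
    destruct (ordering_exists beta (2 * n) (energy_SW n E W) v1) as [lv Hlv].
    pose proof Hlu as [Plu _]. pose proof Hlv as [Plv _].
    set (t0 := ZS * exp (- beta * W)).
    pose proof (exp_pos (- beta * W)).
    assert (t0pos : 0 <= t0) by (unfold t0; left; apply Rmult_lt_0_compat; auto).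
    assert (Hlt : t0 < P).
    { assert (exp (- beta * W) < exp (- beta * Wdet)) by (apply exp_increasing; nra).
      rewrite HeW in H0. unfold t0.
      apply Rmult_lt_compat_l with (r := ZS) in H0; auto.
      replace (ZS * (P / ZS)) with P in H0 by (field; lra). exact H0. }
    unfold det_work_set, thermo_majorises in HW. fold u0 v1 in HW.
    specialize (HW lu lv Hlu Hlv t0).
    rewrite C5 in HW. specialize (HW ltac:(unfold t0 in *; lra)).
    pose proof (tc_strict beta (energy_SW n E W) u0 lu (fun j _ => Cu0 j) t0 t0pos) as Hs.
    rewrite (C2 W lu Plu), (C1 lu Plu) in Hs. specialize (Hs Hlt).
    pose proof (tc_lower beta (energy_SW n E W) v1 lv (ordering_ss _ _ _ _ _ Hlv) (fun j _ => Cv0 j) t0 t0pos) as [_ Hb].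
    rewrite (C4 W lv Plv), (C3 lv Plv) in Hb. specialize (Hb ltac:(unfold t0; lra)).
    lra.
  - intros b Hb. apply Hb. exact Hdet.
Qed.
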